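(* If $A,B\in\mathcal T_{n,d}$ are block Toeplitz matrices with $A\intercal B$, then $\mathbf E_i(A)\intercal\mathbf E_j(B)$ for all $i,j\in\{0,\dots,n-1\}$.
   Context: $\mathcal T_{n,d}$ is the set of $n\times n$ block Toeplitz matrices $A=(A_{i-j})_{i,j=0}^{n-1}$ with entries $A_m\in\mathcal M_d(\mathbb C)$. For block Toeplitz $A,B$, write $A\intercal B$ if $AB$ is block Toeplitz. For $k=0,\dots,n-1$, $\mathbf E_k$ is the map on $n\times n$ block matrices such that the $(i,j)$ block entry of $\mathbf E_k(T)$ equals $T_{i,j}$ if $i-j=k$ or $i-j=k-n$, and $0$ otherwise. *)

(* Defs.v *)
From HB Require Import structures.
From mathcomp Require Import all_boot all_order all_algebra.
Set Implicit Arguments. Unset Strict Implicit. Unset Printing Implicit Defensive.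
Import GRing.Theory.
Local Open Scope ring_scope.

Definition blockmx (R : nzRingType) (n d : nat) := 'I_n -> 'I_n -> 'M[R]_d.

Definition is_block_toeplitz (R : nzRingType) (n d : nat) (T : blockmx R n d) : Prop :=
  exists a : int -> 'M[R]_d, forall i j : 'I_n, T i j = a (i%:Z - j%:Z).

Definition bmul (R : nzRingType) (n d : nat) (A B : blockmx R n d) : blockmx R n d :=
  fun i j => \sum_(k < n) (A i k *m B k j).

(* A ⊺ B : AB is block Toeplitz (A, B assumed block Toeplitz in the statement). *)
Definition tcomm (R : nzRingType) (n d : nat) (A B : blockmx R n d) : Prop :=
  is_block_toeplitz (bmul A B).

Definition Ek (R : nzRingType) (n d : nat) (k : nat) (T : blockmx R n d) : blockmx R n d :=
  fun i j => if (i%:Z - j%:Z == k%:Z) || (i%:Z - j%:Z == k%:Z - n%:Z)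
             then T i j else 0.

(* Main.v *)
Require Import Defs.
From mathcomp Require Import all_boot all_order all_algebra.
From mathcomp Require Import zify.
Set Implicit Arguments. Unset Strict Implicit. Unset Printing Implicit Defensive.
Import GRing.Theory.
Local Open Scope ring_scope.

Lemma toep_of_shift (R : nzRingType) m d (T : blockmx R m.+1 d) :
 (forall x y : nat, (x < m)%N -> (y < m)%N ->
    T (inord x.+1) (inord y.+1) = T (inord x) (inord y)) -> is_block_toeplitz T.
Proof.
move=> H.
have Hk: forall k x y, (x + k <= m)%N -> (y + k <= m)%N ->
   T (inord (x+k)) (inord (y+k)) = T (inord x) (inord y).
  elim=> [|k IH] x y hx hy; first by rewrite !addn0.
  rewrite !addnS H; [apply IH|..]; lia.
exists (fun z => match z with Posz k => T (inord k) (inord 0)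
                 | Negz k => T (inord 0) (inord k.+1) end).
move=> i j; have hi := ltn_ord i; have hj := ltn_ord j.
case: (leqP j i) => hij.
- rewrite subzn //.
  have := Hk j (i-j)%N 0%N. rewrite subnK // add0n !inord_val => -> //; lia.
- have -> : i%:Z - j%:Z = Negz (j - i.+1) by rewrite NegzE; lia.
  have := Hk i 0%N (j-i)%N. rewrite subnK ?add0n ?inord_val; last lia.
  move=> -> //; try lia. congr (T _ (inord _)); lia.
Qed.

Lemma bmul_shift (R : nzRingType) m d (T U : blockmx R m.+1 d) (a b : int -> 'M[R]_d)
  (hT : forall p q, T p q = a (p%:Z - q%:Z)) (hU : forall p q, U p q = b (p%:Z - q%:Z))
  (x y : nat) : (x < m)%N -> (y < m)%N ->
  bmul T U (inord x.+1) (inord y.+1) + a (x%:Z - m%:Z) *m b (m%:Z - y%:Z) =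
  bmul T U (inord x) (inord y) + a (x.+1%:Z) *m b (- (y.+1)%:Z).
Proof.
move=> hx hy; rewrite /bmul.
rewrite big_ord_recl big_ord_recr /= !hT !hU !inordK; try lia.
rewrite -addrA addrC; congr (_ + _); last first.
  by congr (a _ *m b _); rewrite /=; lia.
congr (_ + _).
apply: eq_bigr => k _; rewrite !hT !hU !inordK /=; try lia.
by congr (a _ *m b _); rewrite /bump /=; lia.
Qed.

Theorem lemma4p1 (R : nzRingType) (n d : nat) (A B : blockmx R n d) :
  is_block_toeplitz A -> is_block_toeplitz B -> tcomm A B ->
  forall i j : 'I_n, tcomm (Ek i A) (Ek j B).
Proof.
move=> [a hA] [b hB] [c hC] i j.
case: n A B i j a b c hA hB hC => [|m] A B i j a b c hA hB hC; first by case: i.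
pose al := fun z : int => if (z == i%:Z) || (z == i%:Z - m.+1%:Z) then a z else 0.
pose be := fun z : int => if (z == j%:Z) || (z == j%:Z - m.+1%:Z) then b z else 0.
have hEA : forall p q, Ek i A p q = al (p%:Z - q%:Z) by move=> p q; rewrite /Ek hA.
have hEB : forall p q, Ek j B p q = be (p%:Z - q%:Z) by move=> p q; rewrite /Ek hB.
have key : forall x y, (x < m)%N -> (y < m)%N ->
    a (x%:Z - m%:Z) *m b (m%:Z - y%:Z) = a (x.+1%:Z) *m b (- (y.+1)%:Z).
  move=> x y hx hy; have := bmul_shift hA hB hx hy.
  rewrite (hC (inord x.+1)) (hC (inord x)) !inordK; try lia.
  have -> : (x.+1%:Z - y.+1%:Z) = x%:Z - y%:Z by lia.
  by move/addrI.
have hi := ltn_ord i; have hj := ltn_ord j.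
apply: toep_of_shift => x y hx hy.
have := bmul_shift hEA hEB hx hy.
suff -> : al (x%:Z - m%:Z) *m be (m%:Z - y%:Z) = al (x.+1%:Z) *m be (- (y.+1)%:Z)
  by move/addIr.
rewrite /al /be.
repeat (case: ifP => [/orP ?|/norP ?]);
  try (by rewrite ?mul0mx ?mulmx0); try (exfalso; lia).
exact: key.
Qed.
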